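(* Let $C$ be a coalgebra over a field. If $C$ is left quasi-co-Frobenius, then $C^*$ is left Rat-Kasch.
   Context: Every right $C$-comodule $M$ is a left $C^*$-module via $f\rightharpoonup m=\sum m_0f(m_1)$; the left $C^*$-modules arising this way are called rational, and rational left $C^*$-modules are the same as right $C$-comodules. In particular $C$ is a left (and similarly right) $C^*$-module. $C$ is left quasi-co-Frobenius (left QcF) if $C$, as a left $C^*$-module, embeds in a direct product of copies of $C^*$ (equivalently, $C$ is projective as a right $C$-comodule). $C^*$ is left Rat-Kasch if every simple rational left $C^*$-module embeds in $C^*$ as a left $C^*$-module. *)

(* Defs.v *)
(* Since MathComp has no tensor product of arbitrary vector spaces, an element
   of V (x) W is represented by a finite list of pairs  sum_i v_i (x) w_i ,
   and identities between tensors are tested against all f (x) g with f, g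
   linear functionals (over a field these separate points of V (x) W). *)
From HB Require Import structures.
From mathcomp Require Import all_boot all_order all_algebra.
Set Implicit Arguments. Unset Strict Implicit. Unset Printing Implicit Defensive.
Import GRing.Theory.
Local Open Scope ring_scope.

Section Coalg.
Variable k : fieldType.

Definition lin (V : lmodType k) (f : V -> k) : Prop :=
  forall (a : k) (x y : V), f (a *: x + y) = a * f x + f y.

Definition tev (V W : lmodType k) (f : V -> k) (g : W -> k) (t : seq (V * W)) : k :=
  \sum_(p <- t) f p.1 * g p.2.

Record is_coalgebra (C : lmodType k) (Delta : C -> seq (C * C)) (eps : C -> k)
  : Prop := {
  coalg_eps_lin : lin eps;
  coalg_Delta_lin : forall (a : k) (x y : C) (f g : C -> k), lin f -> lin g ->
    tev f g (Delta (a *: x + y)) = a * tev f g (Delta x) + tev f g (Delta y);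
  coalg_coassoc : forall (f g h : C -> k), lin f -> lin g -> lin h -> forall c : C,
    \sum_(p <- Delta c) tev f g (Delta p.1) * h p.2
    = \sum_(p <- Delta c) f p.1 * tev g h (Delta p.2);
  coalg_counit_l : forall c : C, \sum_(p <- Delta c) eps p.1 *: p.2 = c;
  coalg_counit_r : forall c : C, \sum_(p <- Delta c) eps p.2 *: p.1 = c }.

Record is_rcomodule (C : lmodType k) (Delta : C -> seq (C * C)) (eps : C -> k)
  (M : lmodType k) (rho : M -> seq (M * C)) : Prop := {
  comod_rho_lin : forall (a : k) (x y : M) (f : M -> k) (g : C -> k), lin f -> lin g ->
    tev f g (rho (a *: x + y)) = a * tev f g (rho x) + tev f g (rho y);
  comod_coassoc : forall (f : M -> k) (g h : C -> k), lin f -> lin g -> lin h ->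
    forall m : M,
    \sum_(p <- rho m) tev f g (rho p.1) * h p.2
    = \sum_(p <- rho m) f p.1 * tev g h (Delta p.2);
  comod_counit : forall m : M, \sum_(p <- rho m) eps p.2 *: p.1 = m }.

Definition conv (C : lmodType k) (Delta : C -> seq (C * C)) (f g : C -> k) : C -> k :=
  fun c => \sum_(p <- Delta c) f p.1 * g p.2.

Definition ract (C M : lmodType k) (rho : M -> seq (M * C)) (f : C -> k) (m : M) : M :=
  \sum_(p <- rho m) f p.2 *: p.1.

(* C is left QcF: C, as a left C^*-module (via f -> c = sum c_1 f(c_2)),
   embeds (injective C^*-module map) in a direct product C^*^I. *)
Definition left_QcF (C : lmodType k) (Delta : C -> seq (C * C)) : Prop :=
  exists (I : Type) (phi : C -> I -> C -> k),
    (forall c i, lin (phi c i)) /\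
    (forall x y i d, phi (x + y) i d = phi x i d + phi y i d) /\
    (forall f c i d, lin f -> phi (ract Delta f c) i d = conv Delta f (phi c i) d) /\
    (forall c, (forall i d, phi c i d = 0) -> c = 0).

Definition rsubmodule (C M : lmodType k) (rho : M -> seq (M * C)) (S : M -> Prop) : Prop :=
  S 0 /\ (forall x y, S x -> S y -> S (x - y)) /\
  (forall f m, lin f -> S m -> S (ract rho f m)).

Definition rsimple (C M : lmodType k) (rho : M -> seq (M * C)) : Prop :=
  (exists m : M, m <> 0) /\
  forall S, rsubmodule rho S -> (forall m, S m -> m = 0) \/ (forall m, S m).

(* C^* is left Rat-Kasch: every simple rational left C^*-module embeds in C^* *)
Definition left_RatKasch (C : lmodType k) (Delta : C -> seq (C * C)) (eps : C -> k)
  : Prop :=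
  forall (M : lmodType k) (rho : M -> seq (M * C)),
    is_rcomodule Delta eps rho -> rsimple rho ->
    exists psi : M -> C -> k,
      (forall m, lin (psi m)) /\
      (forall x y d, psi (x + y) d = psi x d + psi y d) /\
      (forall f m d, lin f -> psi (ract rho f m) d = conv Delta f (psi m) d) /\
      (forall m, (forall d, psi m d = 0) -> m = 0).

End Coalg.

(* Main.v *)
Require Import Defs.
From mathcomp Require Import all_boot all_order all_algebra.
From mathcomp Require Import boolp classical_sets.
Set Implicit Arguments. Unset Strict Implicit. Unset Printing Implicit Defensive.
Import GRing.Theory.
Local Open Scope ring_scope.

Definition epsl {T : Type} (t0 : T) (P : T -> Prop) : T :=
  match pselect (exists x, P x) with
  | left h => proj1_sig (cid h)
  | right _ => t0 end.

Lemma epslP {T : Type} (t0 : T) (P : T -> Prop) : (exists x, P x) -> P (epsl t0 P).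
Proof.
move=> h; rewrite /epsl; case: pselect => [h'|//].
exact: proj2_sig (cid h').
Qed.

Section Sep.
Variables (k : fieldType) (V : lmodType k) (v : V).
Hypothesis v0 : v != 0.

Definition subsp (W : V -> Prop) := W 0 /\ forall a x y, W x -> W y -> W (a *: x + y).
Definition linon (W : V -> Prop) (f : V -> k) :=
  forall a x y, W x -> W y -> f (a *: x + y) = a * f x + f y.

Record pr := Pr { pW : V -> Prop; pf : V -> k; pS : subsp pW; pL : linon pW pf;
  pv : pW v; p1 : pf v = 1 }.

Definition Rle (s t : pr) :=
  (forall x, pW s x -> pW t x) /\ (forall x, pW s x -> pf t x = pf s x).

Lemma subsp_opp W x : subsp W -> W x -> W (- x).
Proof. by move=> [W0 WC] Wx; have := WC (-1) x 0 Wx W0; rewrite addr0 scaleN1r. Qed.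

Lemma subsp_add W x y : subsp W -> W x -> W y -> W (x + y).
Proof. by move=> [W0 WC] Wx Wy; have := WC 1 x y Wx Wy; rewrite scale1r. Qed.

Lemma extend (t : pr) x : ~ pW t x -> exists s : pr, Rle t s /\ pW s x.
Proof.
move=> Nx.
have uniq a1 a2 w1 w2 : pW t w1 -> pW t w2 -> w1 + a1 *: x = w2 + a2 *: x ->
    a1 = a2 /\ w1 = w2.
  move=> W1 W2 E.
  have [ea|na] := eqVneq a1 a2.
    by split=> //; move: E; rewrite ea => /addIr.
  exfalso; apply: Nx.
  have -> : x = (a1 - a2)^-1 *: (w2 - w1).
    have : (a1 - a2) *: x = w2 - w1.
      by rewrite scalerBl -[a1 *: x](addKr w1) E addrA addrK addrC.
    move=> <-; rewrite scalerA mulVf ?scale1r // subr_eq0 //.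
  have [W0 WC] := pS t; rewrite -[_ *: _]addr0; apply: WC => //.
  by apply: subsp_add (pS t) W2 (subsp_opp (pS t) W1).
pose W y := exists a w, pW t w /\ y = w + a *: x.
pose P y (p : k * V) := pW t p.2 /\ y = p.2 + p.1 *: x.
pose f y := let p := epsl (0, 0) (P y) in pf t p.2.
have fE a w : pW t w -> f (w + a *: x) = pf t w.
  move=> Ww; rewrite /f.
  have [] := @epslP _ (0,0) (P (w + a *: x)); first by exists (a, w).
  by move=> W2 /uniq => /(_ Ww W2) [_ E]; rewrite /= -E.
have WS : subsp W.
  split; first by exists 0, 0; rewrite scale0r addr0; split=> //; case: (pS t).
  move=> c y1 y2 [a1 [w1 [W1 ->]]] [a2 [w2 [W2 ->]]].
  exists (c * a1 + a2), (c *: w1 + w2); split; first by case: (pS t) => _; apply.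
  by rewrite scalerDr scalerDl scalerA addrACA.
have fL : linon W f.
  move=> c y1 y2 [a1 [w1 [W1 ->]]] [a2 [w2 [W2 ->]]].
  have -> : c *: (w1 + a1 *: x) + (w2 + a2 *: x) = (c *: w1 + w2) + (c * a1 + a2) *: x.
    by rewrite scalerDr scalerDl scalerA addrACA.
  rewrite !fE //; last by case: (pS t) => _; apply.
  by rewrite (@pL t).
have Wv : W v by exists 0, v; rewrite scale0r addr0; split=> //; exact: pv.
have fv : f v = 1 by rewrite -[v]addr0 -(scale0r x) fE ?(p1 t) //; exact: pv.
exists (Pr WS fL Wv fv); split; last by exists 1, 0; rewrite scale1r add0r; split=> //; case: (pS t).
split=> /= y Wy; first by exists 0, y; rewrite scale0r addr0.
by rewrite /= -{1}[y]addr0 -(scale0r x) fE.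
Qed.

Lemma sep_fun : exists f : V -> k, lin f /\ f v = 1.
Proof.
have uniqv a b : a *: v = b *: v -> a = b.
  by move/eqP; rewrite -subr_eq0 -scalerBl scaler_eq0 (negPf v0) orbF subr_eq0 => /eqP.
pose W0 y := exists a, y = a *: v.
pose f0 y := epsl 0 (fun a => y = a *: v).
have f0E a : f0 (a *: v) = a.
  have := @epslP _ 0 (fun b => a *: v = b *: v) (ex_intro _ a erefl).
  by move/uniqv.
have WS : subsp W0.
  split; first by exists 0; rewrite scale0r.
  by move=> c _ _ [a1 ->] [a2 ->]; exists (c * a1 + a2); rewrite scalerDl scalerA.
have fL : linon W0 f0.
  move=> c _ _ [a1 ->] [a2 ->].
  by rewrite scalerA -scalerDl !f0E.
have Wv : W0 v by exists 1; rewrite scale1r.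
have fv : f0 v = 1 by rewrite -[v]scale1r f0E.
pose t0 := Pr WS fL Wv fv.
pose R s t := `[< Rle s t >].
have [|||t tmax] := @ZL_preorder pr t0 R.
- by move=> t; apply/asboolP; split.
- move=> r s t /asboolP [h1 h2] /asboolP [h3 h4]; apply/asboolP; split.
    by move=> x /h1 /h3.
  by move=> x Wx; rewrite h4 ?h2 //; exact: h1.
- move=> A Atot.
  have [[s0 As0]|NA] := pselect (exists s, A s); last first.
    by exists t0 => s As; exfalso; apply: NA; exists s.
  have tot s t : A s -> A t -> Rle s t \/ Rle t s.
    by move=> As At; case: (Atot s t As At) => /asboolP; [left|right].
  pose WU x := exists s, A s /\ pW s x.
  pose fU x := pf (epsl s0 (fun s => A s /\ pW s x)) x.
  have fUE s x : A s -> pW s x -> fU x = pf s x.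
    move=> As Wx; rewrite /fU.
    have [] := @epslP _ s0 (fun s => A s /\ pW s x); first by exists s.
    set e := epsl _ _ => Ae We.
    by case: (tot e s Ae As) => [[_ h]|[_ h]]; rewrite h.
  have common s t x y : A s -> A t -> pW s x -> pW t y ->
      exists u, [/\ A u, pW u x & pW u y].
    move=> As At Wx Wy; case: (tot s t As At) => [[h _]|[h _]].
      by exists t; split=> //; exact: h.
    by exists s; split=> //; exact: h.
  have WS' : subsp WU.
    split; first by exists s0; split=> //; case: (pS s0).
    move=> c x y [s [As Wx]] [t [At Wy]].
    have [u [Au Wux Wuy]] := common s t x y As At Wx Wy.
    by exists u; split=> //; case: (pS u) => _; apply.
  have fL' : linon WU fU.
    move=> c x y [s [As Wx]] [t [At Wy]].
    have [u [Au Wux Wuy]] := common s t x y As At Wx Wy.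
    rewrite !(fUE u) //; first exact: (@pL u).
    by case: (pS u) => _; apply.
  have Wv' : WU v by exists s0; split=> //; exact: pv.
  have fv' : fU v = 1 by rewrite (fUE s0) ?(p1 s0) //; exact: pv.
  exists (Pr WS' fL' Wv' fv') => s As; apply/asboolP; split=> /= x Wx.
    by exists s.
  exact: fUE.
have Wall : forall x, pW t x.
  move=> x; have [//|Nx] := pselect (pW t x).
  have [s [ts Wsx]] := extend Nx.
  by have /asboolP [h _] := tmax s (introT (asboolP _) ts); exact: h.
exists (pf t); split; last exact: p1.
by move=> a x y; apply: (@pL t).
Qed.

End Sep.
Section Aux.
Variable k : fieldType.

Lemma dbl0 (Z : zmodType) (x : Z) : x = x + x -> x = 0.
Proof. by move/(congr1 (fun z => z - x)); rewrite addrK subrr. Qed.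

Lemma lin0 (V : lmodType k) (f : V -> k) : lin f -> f 0 = 0.
Proof.
move=> lf; have := lf 1 0 0; rewrite scale1r addr0 mul1r; exact: dbl0.
Qed.

Lemma linD (V : lmodType k) (f : V -> k) x y : lin f -> f (x + y) = f x + f y.
Proof. by move=> lf; have := lf 1 x y; rewrite scale1r mul1r. Qed.

Lemma linZ (V : lmodType k) (f : V -> k) a x : lin f -> f (a *: x) = a * f x.
Proof. by move=> lf; have := lf a x 0; rewrite addr0 (lin0 lf) addr0. Qed.

Lemma lin_sum (V : lmodType k) (T : Type) (f : V -> k) (s : seq T) (a : T -> k) (F : T -> V) :
  lin f -> f (\sum_(p <- s) a p *: F p) = \sum_(p <- s) a p * f (F p).
Proof.
move=> lf; elim: s => [|p s IH]; first by rewrite !big_nil lin0.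
by rewrite !big_cons -IH (lf (a p)).
Qed.

Lemma sepV (V : lmodType k) (x y : V) : (forall g : V -> k, lin g -> g x = g y) -> x = y.
Proof.
move=> H; apply/eqP; rewrite -subr_eq0; apply/negPn/negP => nz.
have [f [lf f1]] := sep_fun nz.
move: f1; have -> : x - y = (-1) *: y + x by rewrite scaleN1r addrC.
by rewrite lf H // mulN1r addNr => /eqP; rewrite eq_sym oner_eq0.
Qed.

End Aux.
Unset Implicit Arguments.
Theorem proposition4p2 (k : fieldType) (C : lmodType k)
  (Delta : C -> seq (C * C)) (eps : C -> k) :
  is_coalgebra Delta eps -> left_QcF Delta -> left_RatKasch Delta eps.
Proof.
move=> HC [I [phi [Hphil [Hphiadd [Hphimod Hphiinj]]]]].
move=> M rho Hcom [[m0 Hm0] Hsimp].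
have [f [lf fm0]] : exists f : M -> k, lin f /\ f m0 = 1.
  by apply: sep_fun; apply/eqP.
pose th m : C := \sum_(p <- rho m) f p.1 *: p.2.
have gth g m : lin g -> g (th m) = tev f g (rho m).
  by move=> lg; rewrite lin_sum.
have thL a x y : th (a *: x + y) = a *: th x + th y.
  apply: sepV => g lg; rewrite (lg a) !gth //.
  exact: (comod_rho_lin Hcom).
have th0 : th 0 = 0.
  by have := thL 1 0 0; rewrite !scale1r addr0; exact: dbl0.
have thD x y : th (x + y) = th x + th y by have := thL 1 x y; rewrite !scale1r.
have linT g h : lin g -> lin h -> lin (fun c => tev g h (Delta c)).
  by move=> lg lh a x y; apply: (coalg_Delta_lin HC).
have linR g : lin g -> lin (fun m => tev f g (rho m)).
  by move=> lg a x y; apply: (comod_rho_lin Hcom).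
have thmod h m : lin h -> th (ract rho h m) = ract Delta h (th m).
  move=> lh; apply: sepV => g lg.
  rewrite gth // /ract (lin_sum _ _ _ (linR g lg)) lin_sum //.
  have -> : \sum_(p <- Delta (th m)) h p.2 * g p.1 = tev g h (Delta (th m)).
    by apply: eq_bigr => p _; rewrite mulrC.
  rewrite (lin_sum _ _ _ (linT g h lg lh)).
  rewrite -(comod_coassoc Hcom lf lg lh).
  by apply: eq_bigr => p _; rewrite mulrC.
have thm0 : th m0 != 0.
  apply/eqP => E.
  have : eps (th m0) = 1.
    rewrite lin_sum; last exact: (coalg_eps_lin HC).
    rewrite -fm0 -{2}(comod_counit Hcom m0) lin_sum //.
    by apply: eq_bigr => p _; rewrite mulrC.
  rewrite E lin0; last exact: (coalg_eps_lin HC).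
  by move/eqP; rewrite eq_sym oner_eq0.
have [[i [d0 Hid]]|N] := pselect (exists i d, phi (th m0) i d <> 0); last first.
  exfalso; move/eqP: thm0; apply; apply: Hphiinj => i d.
  by apply: contrapT => nz; apply: N; exists i, d.
pose psi m := phi (th m) i.
have psiD x y d : psi (x + y) d = psi x d + psi y d by rewrite /psi thD Hphiadd.
have psi0 d : psi 0 d = 0.
  by have := psiD 0 0 d; rewrite addr0; exact: dbl0.
exists psi; split; first by move=> m; exact: Hphil.
split; first exact: psiD.
split; first by move=> h m d lh; rewrite /psi thmod // Hphimod.
move=> m Hm.
pose S x := forall d, psi x d = 0.
have SS : rsubmodule rho S.
  split; first exact: psi0.
  split.
    move=> x y Sx Sy d; have := psiD (x - y) y d.
    by rewrite subrK Sx Sy addr0 => ->.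
  move=> h x lh Sx d; rewrite /psi thmod // Hphimod // /conv.
  by rewrite big1 // => p _; rewrite -/(psi x) Sx mulr0.
case: (Hsimp S SS) => [H|H]; first exact: H.
by exfalso; apply: Hid; apply: H.
Qed.
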